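(* In the misspecified setting described in the context (in particular $\rho(A)<1$), the matrix $M=\bar{\mathbb{E}}[y_{t+1}y_t^\top]\,\Sigma_y^{-1}$ (the limit of the single-step least-squares estimate $\hat G_y$, equal to $CA\Sigma_xC^\top\Sigma_y^{-1}$) satisfies $\rho(M)\le 1$.
   Context: Let $A\in\mathbb{R}^{d_x\times d_x}$, $B_w\in\mathbb{R}^{d_x\times d_x}$, $C\in\mathbb{R}^{d_y\times d_x}$, $D_v\in\mathbb{R}^{d_y\times d_y}$ with spectral radius $\rho(A)<1$ and $D_vD_v^\top\succ0$. System: $x_{t+1}=Ax_t+B_ww_t$, $y_t=Cx_t+D_vv_t$, $w_t\sim\mathcal N(0,I_{d_x})$, $v_t\sim\mathcal N(0,I_{d_y})$ i.i.d. and independent, considered in steady state. $\Sigma_x$ and $\Sigma_y$ are the stationary covariances of $x_t$ and $y_t$ ($\Sigma_y\succ0$); $\bar{\mathbb{E}}[f(t)]=\lim_{T\to\infty}\mathbb{E}\frac1T\sum_{t=0}^Tf(t)$; $\rho(\cdot)$ is the spectral radius. *)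

(* Defs.v *)
From HB Require Import structures.
From mathcomp Require Import all_boot all_order all_algebra.
From mathcomp Require Import complex.
Set Implicit Arguments. Unset Strict Implicit. Unset Printing Implicit Defensive.
Import Order.TTheory GRing.Theory Num.Theory.
Local Open Scope ring_scope.

Section Spectral.
Variable R : rcfType.

Definition cmod (z : R[i]) : R :=
  Num.sqrt (complex.Re z ^+ 2 + complex.Im z ^+ 2).

Definition cplx_mx m n (A : 'M[R]_(m, n)) : 'M[R[i]]_(m, n) :=
  map_mx (fun x : R => x%:C%C) A.

Lemma char_poly_splits n (A : 'M[R]_n) :
  exists rs : seq R[i],
    char_poly (cplx_mx A) == \prod_(z <- rs) ('X - z%:P).
Proof.
have [rs Hrs] := closed_field_poly_normal (char_poly (cplx_mx A)).
by exists rs; apply/eqP; rewrite Hrs (monicP (char_poly_monic _)) scale1r.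
Qed.

(* the eigenvalues of A (complex roots of its characteristic polynomial,
   listed with algebraic multiplicity) *)
Definition eigvals n (A : 'M[R]_n) : seq R[i] := xchoose (char_poly_splits A).

(* spectral radius: largest modulus of an eigenvalue (0 for the empty matrix) *)
Definition spectral_radius n (A : 'M[R]_n) : R :=
  \big[Num.max/0]_(z <- eigvals A) cmod z.

Definition posdef n (P : 'M[R]_n) : Prop :=
  P^T = P /\ forall v : 'cV[R]_n, v != 0 -> 0 < (v^T *m P *m v) 0 0.

(* Stationary state covariance of x_{t+1} = A x_t + Bw w_t with w_t ~ N(0,I):
   it is characterized by the discrete Lyapunov equation (unique solution
   when rho(A) < 1). *)
Definition stationary_state_cov dx (A Bw Sx : 'M[R]_dx) : Prop :=
  Sx = A *m Sx *m A^T + Bw *m Bw^T.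

(* stationary output covariance Sigma_y = E[y_t y_t^T] *)
Definition Sigma_y dx dy (C : 'M[R]_(dy, dx)) (Dv : 'M[R]_dy) (Sx : 'M[R]_dx)
  : 'M[R]_dy := C *m Sx *m C^T + Dv *m Dv^T.

(* stationary lag-one cross covariance  Ebar[y_{t+1} y_t^T] = C A Sigma_x C^T *)
Definition lag1_cov dx dy (A : 'M[R]_dx) (C : 'M[R]_(dy, dx)) (Sx : 'M[R]_dx)
  : 'M[R]_dy := C *m A *m Sx *m C^T.

End Spectral.

(* Main.v *)
Require Import Defs.
From HB Require Import structures.
From mathcomp Require Import all_boot all_order all_algebra.
From mathcomp Require Import complex.
From mathcomp Require Import ring lra.
Import Order.TTheory GRing.Theory Num.Theory.
Local Open Scope ring_scope.

Section Herm.
Context {C : numClosedFieldType}.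

Definition hadj {m n} (M : 'M[C]_(m, n)) : 'M[C]_(n, m) := (map_mx Num.conj M)^T.

Lemma hadjK m n (M : 'M[C]_(m, n)) : hadj (hadj M) = M.
Proof.
by apply/matrixP=> i j; rewrite /hadj !mxE conjCK.
Qed.

Lemma hadjM m n p (A : 'M[C]_(m, n)) (B : 'M[C]_(n, p)) :
  hadj (A *m B) = hadj B *m hadj A.
Proof. by rewrite /hadj map_mxM trmx_mul. Qed.

Lemma hadjD m n (A B : 'M[C]_(m, n)) : hadj (A + B) = hadj A + hadj B.
Proof. by rewrite /hadj map_mxD linearD. Qed.

Lemma hadjN m n (A : 'M[C]_(m, n)) : hadj (- A) = - hadj A.
Proof. by rewrite /hadj map_mxN linearN. Qed.

Lemma hadjB m n (A B : 'M[C]_(m, n)) : hadj (A - B) = hadj A - hadj B.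
Proof. by rewrite hadjD hadjN. Qed.

Lemma hadjZ m n c (A : 'M[C]_(m, n)) : hadj (c *: A) = c^* *: hadj A.
Proof. by apply/matrixP=> i j; rewrite /hadj !mxE rmorphM. Qed.

Lemma hadj0 m n : hadj (0 : 'M[C]_(m, n)) = 0.
Proof. by apply/matrixP=> i j; rewrite /hadj !mxE conjC0. Qed.

Lemma hadj1 n : hadj (1%:M : 'M[C]_n) = 1%:M.
Proof. by rewrite /hadj map_mx1 trmx1. Qed.

Lemma hadj_col m1 m2 n (a : 'M[C]_(m1, n)) (b : 'M[C]_(m2, n)) :
  hadj (col_mx a b) = row_mx (hadj a) (hadj b).
Proof. by rewrite /hadj map_col_mx tr_col_mx. Qed.

Lemma hadj_inv n (A : 'M[C]_n) : hadj (invmx A) = invmx (hadj A).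
Proof. by rewrite /hadj map_invmx trmx_inv. Qed.

Lemma hadj_block m1 m2 n1 n2 (a : 'M[C]_(m1, n1)) b c (d : 'M[C]_(m2, n2)) :
  hadj (block_mx a b c d) = block_mx (hadj a) (hadj c) (hadj b) (hadj d).
Proof. by rewrite /hadj map_block_mx tr_block_mx. Qed.

Definition bf {m n} (X : 'M[C]_(m, n)) (u : 'cV[C]_m) (v : 'cV[C]_n) : C :=
  (hadj u *m X *m v) 0 0.

Definition herm {n} (X : 'M[C]_n) := hadj X = X.
Definition psd {n} (X : 'M[C]_n) := forall v, 0 <= bf X v v.
Definition pd {n} (X : 'M[C]_n) := forall v, v != 0 -> 0 < bf X v v.

Lemma bfDl m n (X : 'M[C]_(m, n)) u1 u2 v : bf X (u1 + u2) v = bf X u1 v + bf X u2 v.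
Proof. by rewrite /bf hadjD !mulmxDl mxE. Qed.
Lemma bfDr m n (X : 'M[C]_(m, n)) u v1 v2 : bf X u (v1 + v2) = bf X u v1 + bf X u v2.
Proof. by rewrite /bf !mulmxDr mxE. Qed.
Lemma bfNl m n (X : 'M[C]_(m, n)) u v : bf X (- u) v = - bf X u v.
Proof. by rewrite /bf hadjN !mulNmx mxE. Qed.
Lemma bfNr m n (X : 'M[C]_(m, n)) u v : bf X u (- v) = - bf X u v.
Proof. by rewrite /bf !mulmxN mxE. Qed.
Lemma bfZl m n (X : 'M[C]_(m, n)) c u v : bf X (c *: u) v = c^* * bf X u v.
Proof. by rewrite /bf hadjZ -!scalemxAl mxE. Qed.
Lemma bfZr m n (X : 'M[C]_(m, n)) c u v : bf X u (c *: v) = c * bf X u v.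
Proof. by rewrite /bf -!scalemxAr mxE. Qed.
Lemma bfXD m n (X Y : 'M[C]_(m, n)) u v : bf (X + Y) u v = bf X u v + bf Y u v.
Proof. by rewrite /bf mulmxDr mulmxDl mxE. Qed.
Lemma bfXN m n (X : 'M[C]_(m, n)) u v : bf (- X) u v = - bf X u v.
Proof. by rewrite /bf mulmxN mulNmx mxE. Qed.
Lemma bfXZ m n (X : 'M[C]_(m, n)) c u v : bf (c *: X) u v = c * bf X u v.
Proof. by rewrite /bf -scalemxAr -scalemxAl mxE. Qed.
Lemma bfMl m n p (X : 'M[C]_(m, n)) (M : 'M[C]_(m, p)) u v :
  bf X (M *m u) v = bf (hadj M *m X) u v.
Proof. by rewrite /bf hadjM !mulmxA. Qed.
Lemma bfMr m n p (X : 'M[C]_(m, n)) (M : 'M[C]_(n, p)) u v :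
  bf X u (M *m v) = bf (X *m M) u v.
Proof. by rewrite /bf !mulmxA. Qed.
Lemma bf_adj m n (X : 'M[C]_(m, n)) u v : bf (hadj X) v u = (bf X u v)^*.
Proof.
rewrite /bf; have -> : hadj v *m hadj X *m u = hadj (hadj u *m X *m v) by rewrite !hadjM hadjK mulmxA.
by rewrite /hadj !mxE.
Qed.

Lemma bf_herm n (X : 'M[C]_n) u v : herm X -> bf X v u = (bf X u v)^*.
Proof. by move=> hX; rewrite -bf_adj hX. Qed.

Lemma bf_herm_real n (X : 'M[C]_n) v : herm X -> bf X v v \is Num.real.
Proof. by move=> hX; apply/CrealP; rewrite -bf_herm. Qed.

Lemma bf11 (X : 'M[C]_1) (a b : 'cV[C]_1) : bf X a b = (a 0 0)^* * X 0 0 * b 0 0.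
Proof. by rewrite /bf !mxE !big_ord1 !mxE big_ord1 /hadj !mxE. Qed.

Lemma bf_block m1 m2 n1 n2 (a : 'M[C]_(m1, n1)) (b : 'M[C]_(m1, n2))
  (c : 'M[C]_(m2, n1)) (d : 'M[C]_(m2, n2)) u1 u2 v1 v2 :
  bf (block_mx a b c d) (col_mx u1 u2) (col_mx v1 v2) =
  bf a u1 v1 + bf b u1 v2 + bf c u2 v1 + bf d u2 v2.
Proof.
rewrite /bf hadj_col mul_row_block mul_row_col !mulmxDl !mxE.
by rewrite !addrA; congr (_ + _); rewrite addrAC.
Qed.

Lemma herm_blocks n1 n2 (Y : 'M[C]_(n1 + n2)) : herm Y ->
  [/\ hadj (ulsubmx Y) = ulsubmx Y, hadj (drsubmx Y) = drsubmx Y &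
      hadj (dlsubmx Y) = ursubmx Y].
Proof.
rewrite /herm -{1 2}(submxK Y) hadj_block => /eq_block_mx [h1 h2 h3 h4].
by split.
Qed.

Lemma schur_id n (Y : 'M[C]_(1 + n)) (al : 'cV[C]_1) (w : 'cV[C]_n) :
  herm Y -> drsubmx Y \in unitmx ->
  bf Y (col_mx al w) (col_mx al w) =
  bf (ulsubmx Y - ursubmx Y *m invmx (drsubmx Y) *m dlsubmx Y) al al +
  bf (drsubmx Y) (w + invmx (drsubmx Y) *m dlsubmx Y *m al)
                 (w + invmx (drsubmx Y) *m dlsubmx Y *m al).
Proof.
move=> hY dU; have [ha hd hc] := @herm_blocks 1 n Y hY.
rewrite -{1}(submxK Y) bf_block.
set a := ulsubmx Y; set b := ursubmx Y; set c := dlsubmx Y; set d := drsubmx Y.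
set Di := invmx d.
rewrite !bfDl !bfDr bfXD bfXN.
rewrite [bf d w (Di *m c *m al)]bfMr [bf d (Di *m c *m al) w]bfMl.
rewrite [bf d (Di *m c *m al) _]bfMl bfMr.
have E1 : d *m (Di *m c) = c by rewrite mulmxA mulmxV ?mul1mx.
have E2 : hadj (Di *m c) = b *m Di by rewrite hadjM hc /Di hadj_inv hd.
rewrite E1 E2 mulmxKV // .
rewrite mulmxA.
ring.
Qed.

Lemma ker_nz n (D : 'M[C]_n) : D \notin unitmx ->
  exists2 v : 'cV[C]_n, v != 0 & D *m v = 0.
Proof.
move=> nU; have : kermx D^T != 0 by rewrite kermx_eq0 row_free_unit unitmx_tr.
case/rowV0Pn => u /sub_kermxP uD nz; exists u^T.
  by apply: contra nz => /eqP/(congr1 trmx); rewrite trmxK trmx0 => ->.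
by rewrite -[D]trmxK -trmx_mul uD trmx0.
Qed.

Lemma bf0l m n (X : 'M[C]_(m, n)) v : bf X 0 v = 0.
Proof. by rewrite /bf hadj0 !mul0mx mxE. Qed.
Lemma bf0r m n (X : 'M[C]_(m, n)) v : bf X v 0 = 0.
Proof. by rewrite /bf mulmx0 mxE. Qed.

Lemma pd_unit {n} {D : 'M[C]_n} : pd D -> D \in unitmx.
Proof.
move=> hD; apply/negPn/negP => /ker_nz [v nz Dv].
by have := hD v nz; rewrite /bf -mulmxA Dv mulmx0 mxE ltxx.
Qed.

Lemma pd_psd {n} {D : 'M[C]_n} : pd D -> psd D.
Proof.
move=> hD v; have [->|nz] := eqVneq v 0; first by rewrite bf0l.
exact/ltW/hD.
Qed.

Definition sc {n} (Y : 'M[C]_(1 + n)) : C :=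
  (ulsubmx Y - ursubmx Y *m invmx (drsubmx Y) *m dlsubmx Y) 0 0.

Lemma schur_id2 n (Y : 'M[C]_(1 + n)) (al : 'cV[C]_1) (w : 'cV[C]_n) :
  herm Y -> drsubmx Y \in unitmx ->
  bf Y (col_mx al w) (col_mx al w) =
  sc Y * `|al 0 0| ^+ 2 +
  bf (drsubmx Y) (w + invmx (drsubmx Y) *m dlsubmx Y *m al)
                 (w + invmx (drsubmx Y) *m dlsubmx Y *m al).
Proof.
move=> hY dU; rewrite schur_id // bf11 /sc normCK; congr (_ + _); ring.
Qed.

Lemma pd_schur n (Y : 'M[C]_(1 + n)) :
  herm Y -> pd (drsubmx Y) -> 0 < sc Y -> pd Y.
Proof.
move=> hY hD hs v nz; have dU := pd_unit hD.
rewrite -(vsubmxK v) schur_id2 //.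
set al := usubmx v; set w := dsubmx v.
have [a0|a0] := eqVneq (al 0 0) 0.
  have al0 : al = 0 by apply/matrixP => i j; rewrite !ord1 a0 mxE.
  rewrite a0 normr0 expr0n /= mulr0 add0r al0 mulmx0 addr0; apply: hD.
  by apply: contra nz => /eqP w0; rewrite -(vsubmxK v) -/al -/w al0 w0 col_mx0.
apply: ltr_wpDr; first exact: pd_psd.
by rewrite mulr_gt0 // exprn_gt0 // normr_gt0.
Qed.
Definition stab {n} (T : 'M[C]_n) := forall i, `|T i i| < 1.

Lemma stab_block n (x : 'M[C]_1) c (A : 'M[C]_n) :
  stab (block_mx x 0 c A) -> `|x 0 0| < 1 /\ stab A.
Proof.
move=> h; split; first by have := h (lshift n 0); rewrite block_mxEul.
by move=> i; have := h (rshift 1 i); rewrite block_mxEdr.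
Qed.

Lemma bf_col0 n (Y : 'M[C]_(1 + n)) (w : 'cV[C]_n) :
  bf Y (col_mx 0 w) (col_mx 0 w) = bf (drsubmx Y) w w.
Proof. by rewrite -{1}(submxK Y) bf_block !bf0l !bf0r !add0r. Qed.

Lemma T_col0 n (x : 'M[C]_1) c (A : 'M[C]_n) (w : 'cV[C]_n) :
  block_mx x 0 c A *m col_mx 0 w = col_mx 0 (A *m w).
Proof. by rewrite mul_block_col !mulmx0 !mul0mx !add0r. Qed.

Lemma sc_v0 n (Y : 'M[C]_(1 + n)) : herm Y -> drsubmx Y \in unitmx ->
  bf Y (col_mx 1%:M (- (invmx (drsubmx Y) *m dlsubmx Y *m 1%:M)))
       (col_mx 1%:M (- (invmx (drsubmx Y) *m dlsubmx Y *m 1%:M))) = sc Y.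
Proof.
move=> hY dU; rewrite schur_id2 // addNr bf0l addr0.
by rewrite [_ 0 0]mxE eqxx mulr1n normr1 expr1n mulr1.
Qed.

Lemma sc_real n (Y : 'M[C]_(1 + n)) : herm Y -> drsubmx Y \in unitmx ->
  sc Y \is Num.real.
Proof. by move=> hY dU; rewrite -sc_v0 //; exact: bf_herm_real. Qed.

Lemma bf_Q n (P T : 'M[C]_n) v :
  bf (P - hadj T *m P *m T) v v = bf P v v - bf P (T *m v) (T *m v).
Proof. by rewrite bfXD bfXN bfMl bfMr. Qed.
Lemma herm_block_diag n (a : 'M[C]_1) (d : 'M[C]_n) :
  herm a -> herm d -> herm (block_mx a 0 0 d).
Proof. by rewrite /herm => ha hd; rewrite hadj_block !hadj0 ha hd. Qed.

Lemma herm_Q n (P T : 'M[C]_n) : herm P -> herm (P - hadj T *m P *m T).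
Proof. by move=> hP; rewrite /herm hadjB !hadjM hadjK hP mulmxA. Qed.

Lemma lyap n (T : 'M[C]_n) : is_trig_mx T -> stab T ->
  exists P, [/\ herm P, pd P &
    forall v, v != 0 -> bf P (T *m v) (T *m v) < bf P v v].
Proof.
move: n T; apply: trigsqmx_ind.
  move=> _; exists 0; split; first by rewrite /herm hadj0.
    by move=> v; rewrite flatmx0 eqxx.
  by move=> v; rewrite flatmx0 eqxx.
move=> n x c A tA IH /stab_block [hx sA].
have [P2 [hP2 pP2 dP2]] := IH sA.
set T := block_mx x 0 c A.
pose Pp (p : C) : 'M[C]_(1 + n) := block_mx p%:M 0 0 P2.
pose Q p := Pp p - hadj T *m Pp p *m T.
have QE p : Q p = block_mx (p%:M - (hadj x *m p%:M *m x + hadj c *m P2 *m c))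
    (- (hadj c *m P2 *m A)) (- (hadj A *m P2 *m c)) (P2 - hadj A *m P2 *m A).
  rewrite /Q /Pp /T hadj_block !hadj0 !mulmx_block.
  rewrite !(mulmx0, mul0mx, addr0, add0r).
  by rewrite opp_block_mx add_block_mx !sub0r.
set D := P2 - hadj A *m P2 *m A.
have pD : pd D.
  move=> w nz; rewrite /D bf_Q subr_gt0; exact: dP2.
have hPp p : p \is Num.real -> herm (Pp p).
  move=> pr; apply: herm_block_diag => //.
  rewrite /herm /hadj map_scalar_mx tr_scalar_mx; congr (_%:M); exact: conj_Creal.
have hQ p : p \is Num.real -> herm (Q p) by move=> pr; apply/herm_Q/hPp.
set K := (hadj c *m P2 *m c + (hadj c *m P2 *m A) *m invmx D *m (hadj A *m P2 *m c)) 0 0.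
have scQ p : sc (Q p) = p * (1 - `|x 0 0| ^+ 2) - K.
  rewrite /sc QE block_mxKul block_mxKur block_mxKdl block_mxKdr -/D.
  have -> : hadj x *m p%:M *m x = (p * `|x 0 0| ^+ 2)%:M.
    apply/matrixP => i j; rewrite !ord1.
    have -> : (hadj x *m p%:M *m x) 0 0 = bf p%:M x x by [].
    by rewrite bf11 [in RHS]mxE [p%:M 0 0]mxE eqxx !mulr1n normCK; ring.
  rewrite !mulNmx !mulmxN opprK !mxE /K !mxE eqxx !mulr1n.
  ring.
have Kr : K \is Num.real.
  have := @sc_real n (Q 0) (hQ 0 (rpred0 _)); rewrite scQ mul0r sub0r.
  rewrite /sc QE block_mxKdr -/D; move=> /(_ (pd_unit pD)).
  by rewrite rpredN.
have hx2 : 0 < 1 - `|x 0 0| ^+ 2.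
  by rewrite subr_gt0 exprn_ilt1 ?normr_ge0.
pose p := (1 + `|K|) / (1 - `|x 0 0| ^+ 2).
have p_gt0 : 0 < p by rewrite divr_gt0 // ltr_wpDr ?normr_ge0 ?ltr01.
have pr : p \is Num.real by apply: gtr0_real.
exists (Pp p); split.
- exact: hPp.
- apply: pd_schur; first exact: hPp.
    by rewrite /Pp block_mxKdr.
  rewrite /sc /Pp block_mxKul block_mxKur !mul0mx subr0 mxE eqxx mulr1n //.
- move=> v nz; rewrite -subr_gt0 -bf_Q -/(Q p).
  apply: pd_schur nz; first exact: hQ.
    by rewrite QE block_mxKdr.
  rewrite scQ /p mulfVK ?gt_eqF //.
  rewrite -addrA ltr_wpDr ?ltr01 // subr_ge0; exact: real_ler_norm.
Qed.
Lemma col_nz0 n (w : 'cV[C]_n) : w != 0 -> col_mx (0 : 'cV[C]_1) w != 0.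
Proof. by move=> nz; rewrite col_mx_eq0 (negbTE nz) andbF. Qed.

Lemma stein_strict n (T : 'M[C]_n) : is_trig_mx T -> stab T ->
  forall Y, herm Y -> (forall v, v != 0 -> bf Y (T *m v) (T *m v) < bf Y v v) ->
  pd Y.
Proof.
move: n T; apply: trigsqmx_ind.
  by move=> _ Y _ _ v; rewrite flatmx0 eqxx.
move=> n x c A tA IH /stab_block [hx sA] Y hY dY.
have [_ hd _] := @herm_blocks 1 n Y hY.
have pD : pd (drsubmx Y).
  apply: (IH sA) => // w nz.
  rewrite -!bf_col0 -(@T_col0 n x c); apply: dY; exact: col_nz0.
have dU := pd_unit pD.
apply: pd_schur => //.
set w0 := - (invmx (drsubmx Y) *m dlsubmx Y *m 1%:M).
have nz0 : col_mx (1%:M : 'cV[C]_1) w0 != 0.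
  apply/negP => /eqP/matrixP/(_ 0 0); rewrite !mxE.
  case: splitP => // i _; rewrite !ord1 !mxE eqxx /= => /eqP; by rewrite oner_eq0.
have := dY _ nz0; rewrite (@sc_v0 n Y hY dU) mul_block_col mulmx1 mul0mx addr0.
rewrite schur_id2 // => h.
have hx2 : 0 < 1 - `|x 0 0| ^+ 2 by rewrite subr_gt0 exprn_ilt1 ?normr_ge0.
have : sc Y * `|x 0 0| ^+ 2 < sc Y.
  by apply: le_lt_trans h; rewrite lerDl; apply: pd_psd.
by rewrite -subr_gt0 -{1}[sc Y]mulr1 -mulrBr pmulr_lgt0.
Qed.

Lemma stein n (T : 'M[C]_n) : is_trig_mx T -> stab T ->
  forall X, herm X -> (forall v, bf X (T *m v) (T *m v) <= bf X v v) -> psd X.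
Proof.
move=> tT sT X hX dX.
have [P [hP pP dP]] := @lyap n T tT sT.
have key e : 0 < e -> pd (X + e *: P).
  move=> e0; apply: (@stein_strict n T tT sT).
    by rewrite /herm hadjD hadjZ hX hP conj_Creal // gtr0_real.
  move=> v nz; rewrite !bfXD !bfXZ; apply: ler_ltD; first exact: dX.
  by rewrite ltr_pM2l //; apply: dP.
move=> v; have [->|nz] := eqVneq v 0; first by rewrite bf0l.
have rX := @bf_herm_real n X v hX.
have qP := pP v nz.
rewrite real_leNgt ?rpred0 //; apply/negP => neg.
have e0 : 0 < - bf X v v / bf P v v by rewrite divr_gt0 // oppr_gt0.
have := key _ e0 v nz; rewrite bfXD bfXZ mulfVK ?gt_eqF // subrr ltxx.
by [].
Qed.
Lemma bf_cong m n (X : 'M[C]_m) (N : 'M[C]_(m, n)) v :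
  bf (hadj N *m X *m N) v v = bf X (N *m v) (N *m v).
Proof. by rewrite bfMl bfMr. Qed.

Lemma trig_root n (T : 'M[C]_n) i : is_trig_mx T -> root (char_poly T) (T i i).
Proof.
move=> tT; rewrite /root char_poly_trig // horner_prod (bigD1 i) //=.
by rewrite hornerXsubC subrr mul0r.
Qed.

Lemma stein_gen n (M : 'M[C]_n) :
  (forall z, root (char_poly M) z -> `|z| < 1) ->
  forall X, herm X -> (forall v, bf X (M *m v) (M *m v) <= bf X v v) -> psd X.
Proof.
case: n M => [|n] M hM X hX dX.
  by move=> v; rewrite [v]flatmx0 bf0l.
have [P Pu tP] := Schur M (ltn0Sn n).
have PU := unitarymx_unit Pu.
move: tP; rewrite /similar_to /conjmx pinvmxE // => tT.
set T := P *m M *m invmx P in tT.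
have sT : stab T.
  move=> i; apply: hM; rewrite -eigenvalue_root_char.
  have := @trig_root _ T i tT; rewrite -eigenvalue_root_char => /eigenvalueP [u uT nz].
  apply/eigenvalueP; exists (u *m P).
    by rewrite -mulmxA -[P *m M](mulmxKV PU) -/T mulmxA uT scalemxAl.
  by rewrite mulmx_free_eq0 // row_free_unit.
pose X' := hadj (invmx P) *m X *m invmx P.
have hX' : herm X' by rewrite /herm /X' !hadjM hadjK hX mulmxA.
have := @stein _ T tT sT X' hX'.
have TP v : invmx P *m (T *m v) = M *m (invmx P *m v).
  by rewrite /T !mulmxA mulVmx // mul1mx.
move=> /(_ _) h v.
have -> : v = invmx P *m (P *m v) by rewrite mulmxA mulVmx // mul1mx.
rewrite -bf_cong; apply: h => w; rewrite !bf_cong TP; exact: dX.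
Qed.
Lemma bf1_ge0 n (u : 'cV[C]_n) : 0 <= bf 1%:M u u.
Proof.
rewrite /bf mulmx1 mxE; apply: sumr_ge0 => j _.
by rewrite /hadj !mxE mulrC mul_conjC_ge0.
Qed.

Lemma bf_delta n (H : 'M[C]_n) i j :
  bf H (delta_mx i 0) (delta_mx j 0) = H i j.
Proof.
rewrite /bf; have -> : hadj (delta_mx i 0 : 'cV[C]_n) = delta_mx 0 i.
  by apply/matrixP => a b; rewrite /hadj !mxE rmorph_nat andbC.
by rewrite -rowE -colE !mxE.
Qed.

Lemma polar n (H : 'M[C]_n) : (forall v, bf H v v = 0) -> H = 0.
Proof.
move=> h; apply/matrixP => i j; rewrite mxE.
set ei : 'cV[C]_n := delta_mx i 0; set ej : 'cV[C]_n := delta_mx j 0.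
have E c : bf H (ei + c *: ej) (ei + c *: ej) = c * H i j + c^* * H j i.
  rewrite !bfDl !bfDr !bfZl !bfZr !bf_delta.
  have := h ei; rewrite bf_delta => ->.
  have := h ej; rewrite bf_delta => ->.
  ring.
have e1' := E 1; rewrite h conjC1 !mul1r in e1'; move/esym: e1' => e1'.
have e2' := E 'i; rewrite h conjCi in e2'; move/esym: e2' => e2'.
have : 'i * (H i j - H j i) = 0 by rewrite mulrBr -mulNr.
move/eqP; rewrite mulf_eq0 (negbTE (neq0Ci C)) /= subr_eq0 => /eqP eij.
move: e1'; rewrite eij -mulr2n -mulr_natr => /eqP.
by rewrite mulf_eq0 pnatr_eq0 orbF => /eqP.
Qed.
Lemma cs_lemma n (X : 'M[C]_n) p q : herm X -> psd X ->
  bf X q q <= bf X p p -> `|bf X q p| <= bf X p p.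
Proof.
move=> hX pX hq; set t := bf X q p; set s := bf X p p; set a := bf X q q.
have [t0|tn] := eqVneq t 0; first by rewrite t0 normr0; apply: pX.
set r := `|t|.
have rn : r != 0 by rewrite normr_eq0.
have rr : r^* = r by apply: conj_Creal; apply: normr_real.
have ct : t^* = r ^+ 2 / t by rewrite /r normCK mulrAC divff // mul1r.
pose om := t / r.
have com : om^* = r / t by rewrite /om rmorphM fmorphV /= rr ct mulrAC expr2 mulfK.
have tq : bf X p q = t^* by rewrite (@bf_herm n X q p hX).
have := pX (om *: q - p).
rewrite !bfDl !bfDr !bfNl !bfNr !bfZl !bfZr -/t -/s -/a tq com ct /om.
have -> : r / t * (t / r * a) - r / t * t + (- (t / r * (r ^+ 2 / t)) - - s)
   = a + s - (r + r).
  by field; rewrite tn rn.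
rewrite subr_ge0 => h.
have : r + r <= s + s by apply: le_trans h _; rewrite lerD2r.
by rewrite -!mulr2n lerMn2r.
Qed.
End Herm.

Lemma ker_nzF (F : fieldType) n (D : 'M[F]_n) : D \notin unitmx ->
  exists2 v : 'cV[F]_n, v != 0 & D *m v = 0.
Proof.
move=> nU; have : kermx D^T != 0 by rewrite kermx_eq0 row_free_unit unitmx_tr.
case/rowV0Pn => u /sub_kermxP uD nz; exists u^T.
  by apply: contra nz => /eqP/(congr1 trmx); rewrite trmxK trmx0 => ->.
by rewrite -[D]trmxK -trmx_mul uD trmx0.
Qed.

Lemma char_poly_tr (Rg : comNzRingType) n (A : 'M[Rg]_n) :
  char_poly A^T = char_poly A.
Proof.
rewrite /char_poly -det_tr; congr (\det _).
by rewrite /char_poly_mx linearB /= tr_scalar_mx map_trmx trmxK. Qed.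

Section Real.
Variable R : rcfType.
Local Notation C := R[i].
Local Notation cm A := (map_mx (real_complex R) A).

Lemma conj_rc (x : R) : ((x%:C)%C)^* = (x%:C)%C :> C.
Proof.
apply/CrealP; rewrite realE.
have [h|h] := lerP 0 x.
  by rewrite -[0 : C]/((0 : R)%:C)%C lecR h.
by rewrite -[0 : C]/((0 : R)%:C)%C !lecR (ltW h) orbT.
Qed.

Lemma hadj_cm m n (A : 'M[R]_(m, n)) : hadj (cm A) = cm (A^T).
Proof. by apply/matrixP => i j; rewrite /hadj !mxE conj_rc. Qed.

Lemma bf_cm m n (P : 'M[R]_(m, n)) u v :
  bf (cm P) (cm u) (cm v) = (((u^T *m P *m v) 0 0)%:C)%C.
Proof. by rewrite /bf hadj_cm -!map_mxM mxE. Qed.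

Lemma posdef_ge0 n (P : 'M[R]_n) (v : 'cV[R]_n) : posdef P -> 0 <= (v^T *m P *m v) 0 0.
Proof.
move=> [_ hP]; have [->|nz] := eqVneq v 0; first by rewrite mulmx0 mxE.
exact/ltW/hP.
Qed.

Lemma posdef_unit n (P : 'M[R]_n) : posdef P -> P \in unitmx.
Proof.
move=> [sP hP]; apply/negPn/negP => /ker_nzF [v nz Pv].
by have := hP v nz; rewrite -mulmxA Pv mulmx0 mxE ltxx.
Qed.

Lemma pd_cm n (P : 'M[R]_n) : posdef P -> pd (cm P).
Proof.
move=> hP w nz.
set a := map_mx (@complex.Re R) w; set b := map_mx (@complex.Im R) w.
have wE : w = cm a + 'i *: cm b.
  apply/matrixP => i j; rewrite !mxE; exact: complexE.
have sym : (a^T *m P *m b) 0 0 = (b^T *m P *m a) 0 0.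
  have tr1 (M : 'M[R]_1) : M 0 0 = (M^T) 0 0 by rewrite mxE.
  by rewrite [LHS]tr1 !trmx_mul trmxK hP.1 mulmxA.
rewrite wE !bfDl !bfDr !bfZl !bfZr !bf_cm sym conjCi.
have -> : forall x y z : C, x + 'i * z + (- 'i * z + - 'i * ('i * y)) = x + y.
  move=> x y z; have hi : 'i * 'i = -1 :> C by rewrite -expr2 sqrCi.
  have e : - 'i * ('i * y) = y by rewrite mulrA mulNr hi opprK mul1r.
  rewrite e; ring.
rewrite -rmorphD ltcR.
have [a0|anz] := eqVneq a 0.
  have bnz : b != 0.
    apply: contra nz => /eqP b0; rewrite wE a0 b0 !map_mx0 scaler0 addr0 //.
  by rewrite ltr_wpDl ?posdef_ge0 //; apply: hP.2.
by rewrite ltr_wpDr ?posdef_ge0 //; apply: hP.2.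
Qed.
Lemma eig_root n (A : 'M[R]_n) z : z \in eigvals A = root (char_poly (cm A)) z.
Proof.
have := xchooseP (char_poly_splits A); rewrite -/(eigvals A) => /eqP E.
by rewrite -root_prod_XsubC -E.
Qed.

Lemma normC_cmod (z : C) : `|z| = ((cmod z)%:C)%C.
Proof. by rewrite normc_def. Qed.
End Real.

Theorem lemma5 (R : rcfType) (dx dy : nat)
  (A Bw : 'M[R]_dx) (C : 'M[R]_(dy, dx)) (Dv : 'M[R]_dy) (Sx : 'M[R]_dx) :
  spectral_radius A < 1 ->
  posdef (Dv *m Dv^T) ->
  stationary_state_cov A Bw Sx ->
  posdef (Sigma_y C Dv Sx) ->
  spectral_radius (lag1_cov A C Sx *m invmx (Sigma_y C Dv Sx)) <= 1.
Proof.
move=> hrho _ hS hSy.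
pose cm m n (X : 'M[R]_(m, n)) : 'M[R[i]]_(m, n) := map_mx (real_complex R) X.
pose M := cm _ _ A^T.
have aM : hadj M = cm _ _ A by rewrite /M hadj_cm trmxK.
have hroot z : root (char_poly M) z -> `|z| < 1.
  rewrite /M /cm -map_trmx char_poly_tr -eig_root => zin.
  rewrite normC_cmod -[1 : R[i]]/((1 : R)%:C)%C ltcR.
  apply: le_lt_trans hrho; rewrite /spectral_radius.
  exact: (le_bigmax_seq _ _ _ _ zin isT).
have hT : Sx^T = A *m Sx^T *m A^T + Bw *m Bw^T.
  by rewrite {1}hS linearD /= !trmx_mul !trmxK mulmxA.
set Z := Sx - Sx^T.
have ZE : A *m Z *m A^T = Z.
  rewrite /Z mulmxBr mulmxBl {2}hT {3}hS.
  by rewrite opprD addrACA subrr addr0.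
have ZT : Z^T = - Z by rewrite /Z linearB /= trmxK opprB.
pose H := 'i *: cm _ _ Z.
have hH : herm H.
  rewrite /herm /H hadjZ hadj_cm ZT map_mxN conjCi scaleNr scalerN opprK //.
have MH : hadj M *m H *m M = H.
  by rewrite aM /H -scalemxAr -scalemxAl /M /cm -!map_mxM ZE.
have pH : psd H.
  apply: (stein_gen _ _ hroot _ hH) => v; rewrite -bf_cong MH //.
have pNH : psd (- H).
  apply: (stein_gen _ _ hroot) => [|v]; first by rewrite /herm hadjN hH.
  by rewrite -bf_cong mulmxN mulNmx MH.
have H0 : H = 0.
  apply: polar => v; apply/eqP; rewrite eq_le pH andbT.
  by have := pNH v; rewrite bfXN oppr_ge0.
have Z0 : Z = 0.
  move: H0; rewrite /H => /eqP; rewrite scaler_eq0 (negbTE (neq0Ci _)) /=.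
  by rewrite -(map_mx0 (real_complex R)) => /eqP/map_mx_inj.
have sS : Sx^T = Sx by apply/esym/eqP; rewrite -subr_eq0 -/Z Z0.
pose X := cm _ _ Sx.
have hX : herm X by rewrite /herm /X hadj_cm sS.
have dX v : bf X (M *m v) (M *m v) <= bf X v v.
  rewrite -subr_ge0 -bf_Q.
  have -> : X - hadj M *m X *m M =
      hadj (hadj (cm _ _ Bw)) *m 1%:M *m hadj (cm _ _ Bw).
    rewrite hadjK aM mulmx1 hadj_cm /X /M /cm -!map_mxM -map_mxB.
    by rewrite {1}hS addrAC subrr add0r.
  rewrite bf_cong; exact: bf1_ge0.
have pX : psd X := stein_gen _ _ hroot _ hX dX.
rewrite /spectral_radius big_seq; apply: bigmax_le => // z.
rewrite eig_root => rz.
set S := Sigma_y C Dv Sx in hSy rz *.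
set K := lag1_cov A C Sx in rz *.
have SU : S \in unitmx := posdef_unit _ _ _ hSy.
have SUc : cm _ _ S \in unitmx by rewrite map_unitmx.
move: rz; rewrite -eigenvalue_root_char => /eigenvalueP [u uM unz].
rewrite map_mxM map_invmx in uM.
have uK : u *m cm _ _ K = z *: (u *m cm _ _ S).
  by rewrite scalemxAl -uM -!mulmxA mulVmx // mulmx1.
set w := hadj u.
have wnz : w != 0.
  by apply: contra unz => /eqP w0; rewrite -[u]hadjK -/w w0 hadj0.
have tK : bf (cm _ _ K) w w = z * bf (cm _ _ S) w w.
  by rewrite /bf /w hadjK uK -scalemxAl mxE.
have sig_pos : 0 < bf (cm _ _ S) w w := pd_cm _ _ _ hSy _ wnz.
have SE : cm _ _ S = hadj (hadj (cm _ _ C)) *m X *m hadj (cm _ _ C) +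
    hadj (hadj (cm _ _ Dv)) *m 1%:M *m hadj (cm _ _ Dv).
  by rewrite !hadjK mulmx1 !hadj_cm /X /cm -!map_mxM -map_mxD.
have KE : cm _ _ K = hadj (hadj (cm _ _ C)) *m (cm _ _ A *m X) *m hadj (cm _ _ C).
  by rewrite hadjK hadj_cm /X /cm -!map_mxM mulmxA.
set p := hadj (cm _ _ C) *m w.
have sigE : bf (cm _ _ S) w w =
    bf X p p + bf 1%:M (hadj (cm _ _ Dv) *m w) (hadj (cm _ _ Dv) *m w).
  by rewrite SE bfXD !bf_cong.
have tE : bf (cm _ _ K) w w = bf X (M *m p) p.
  by rewrite KE bf_cong -/p -aM -bfMl.
have ht : `|bf X (M *m p) p| <= bf X p p := cs_lemma _ _ _ _ hX pX (dX p).
rewrite -(lecR (cmod z) 1) -normC_cmod.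
have : `|z| * bf (cm _ _ S) w w <= 1 * bf (cm _ _ S) w w.
  rewrite -{1}(ger0_norm (ltW sig_pos)) -normrM -tK tE mul1r sigE.
  by apply: le_trans ht _; rewrite lerDl; exact: bf1_ge0.
by rewrite ler_pM2r.
Qed.
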